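(* Every graph $H\in\mathcal{H}'$ is 4-critical, i.e. $H$ is not properly 3-colorable but every proper subgraph of $H$ is.
   Context: A near-bipartite coloring of a graph is a partition of its vertices into $I,F$ with $I$ independent and $G[F]$ a forest; a graph is nb-critical if it has none but every proper subgraph has one. Base graphs: $K_4$; the wheel $W_5$ (a 5-cycle plus a vertex adjacent to all five cycle vertices); $J_7$, with vertices $w_1,\dots,w_4,v_1,v_2,v_3$ and edges $w_1v_1,w_1v_3,w_1w_4,w_2v_1,w_2v_2,w_2w_4,w_3v_2,w_3v_3,w_3w_4,v_1v_2,v_1v_3,v_2v_3$; and $J_{12}$, with vertices $a,b,p_1,\dots,p_4,q_1,\dots,q_6$ and edges $ab,p_1p_2,p_3p_4,ap_1,ap_2,bp_3,bp_4,q_1p_1,q_1p_2,q_2p_1,q_2p_2,q_3p_3,q_3p_4,q_4p_3,q_4p_4,q_5q_1,q_5q_3,q_6q_2,q_6q_4,q_5q_6$. The family $\mathcal{H}'$ of simple graphs is defined recursively: vertices $s,t$ of a graph $J$ are specially-linked in $J$ if there exist $H\in\mathcal{H}'$ and $vw\in E(H)$ such that $J$ contains a subgraph isomorphic to $H-vw$ with $v\mapsto s$, $w\mapsto t$. A graph $H$ lies in $\mathcal{H}'$ if it is a base graph, or if $H$ is nb-critical and has an induced cycle $C=x_1\cdots x_k$, $k\in\{3,5\}$, all $x_i$ of degree 3 in $H$, such that, writing $N(x_j)=\{x_{j-1},x_{j+1},z_j\}$ (indices mod $k$), whenever $z_j\ne z_{j+1}$ the vertices $z_j,z_{j+1}$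 are specially-linked in $H-V(C)$. *)

(* Defs.v *)
From mathcomp Require Import all_boot.
Set Implicit Arguments.
Unset Strict Implicit.
Unset Printing Implicit Defensive.

Record graph := Graph { vert : finType; adj : rel vert }.

Definition simple_rel (T : finType) (e : rel T) : Prop :=
  (forall x y, e x y = e y x) /\ (forall x, ~~ e x x).

Definition is_subgraph (T : finType) (e : rel T) (S : {set T}) (f : rel T) : Prop :=
  (forall x y, f x y = f y x) /\
  (forall x y, f x y -> [&& e x y, x \in S & y \in S]).

Definition proper_subgraph (T : finType) (e : rel T) (S : {set T}) (f : rel T) : Prop :=
  is_subgraph e S f /\ (S != setT \/ exists x y, e x y && ~~ f x y).

Definition induces_forest (T : finType) (f : rel T) (F : {set T}) : Prop :=
  ~ exists p : seq T, [/\ 3 <= size p, uniq p, all (fun v => v \in F) p & cycle f p].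

Definition independent (T : finType) (f : rel T) (I : {set T}) : Prop :=
  forall x y, x \in I -> y \in I -> ~~ f x y.

Definition nb_colorable (T : finType) (S : {set T}) (f : rel T) : Prop :=
  exists I F : {set T}, [/\ I :|: F = S, [disjoint I & F], independent f I & induces_forest f F].

Definition three_colorable (T : finType) (S : {set T}) (f : rel T) : Prop :=
  exists c : T -> 'I_3, forall x y, x \in S -> y \in S -> f x y -> c x != c y.

Definition nb_critical (T : finType) (e : rel T) : Prop :=
  ~ nb_colorable setT e /\
  forall S f, proper_subgraph e S f -> nb_colorable S f.

Definition four_critical (T : finType) (e : rel T) : Prop :=
  ~ three_colorable setT e /\
  forall S f, proper_subgraph e S f -> three_colorable S f.

Definition rel_of_edges (n : nat) (E : seq (nat * nat)) : rel 'I_n :=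
  fun x y => ((nat_of_ord x, nat_of_ord y) \in E) || ((nat_of_ord y, nat_of_ord x) \in E).

Definition K4 : graph := @Graph 'I_4 (fun x y => x != y).

Definition W5 : graph := @Graph 'I_6 (@rel_of_edges 6
  [:: (0,1); (1,2); (2,3); (3,4); (4,0); (0,5); (1,5); (2,5); (3,5); (4,5)]%N).

(* w1,w2,w3,w4 = 0,1,2,3 ; v1,v2,v3 = 4,5,6 *)
Definition J7 : graph := @Graph 'I_7 (@rel_of_edges 7
  [:: (0,4); (0,6); (0,3); (1,4); (1,5); (1,3); (2,5); (2,6); (2,3);
      (4,5); (4,6); (5,6)]%N).

(* a,b = 0,1 ; p1..p4 = 2..5 ; q1..q6 = 6..11 *)
Definition J12 : graph := @Graph 'I_12 (@rel_of_edges 12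
  [:: (0,1); (2,3); (4,5); (0,2); (0,3); (1,4); (1,5);
      (6,2); (6,3); (7,2); (7,3); (8,4); (8,5); (9,4); (9,5);
      (10,6); (10,8); (11,7); (11,9); (10,11)]%N).

Definition graph_iso (G H : graph) : Prop :=
  exists phi : vert G -> vert H, bijective phi /\
    forall x y, @adj H (phi x) (phi y) = @adj G x y.

Definition is_base (H : graph) : Prop :=
  graph_iso H K4 \/ graph_iso H W5 \/ graph_iso H J7 \/ graph_iso H J12.

(* s,t are specially linked in the graph J = (T,e) restricted to vertex set S
   (i.e. J = G[S]), relative to a class P of graphs: there are H in P and an
   edge vw of H such that H - vw embeds (as a subgraph) in J with v |-> s,
   w |-> t. *)
Definition specially_linked_gen (P : graph -> Prop)
    (T : finType) (e : rel T) (S : {set T}) (s t : T) : Prop :=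
  exists H : graph, P H /\ exists (v w : vert H), @adj H v w /\
    exists phi : vert H -> T,
      [/\ injective phi, (forall x, phi x \in S), phi v = s, phi w = t &
          forall x y, @adj H x y -> ~~ (((x == v) && (y == w)) || ((x == w) && (y == v))) ->
                      e (phi x) (phi y)].

Inductive inH' : graph -> Prop :=
| inH'_base (H : graph) :
    simple_rel (@adj H) -> is_base H -> inH' H
| inH'_rec (H : graph) (k : nat) (x : 'I_k -> vert H) :
    simple_rel (@adj H) ->
    nb_critical (@adj H) ->
    (k = 3 \/ k = 5) ->
    injective x ->
    (forall i, @adj H (x i) (x (ordS i))) ->
    (forall i j, @adj H (x i) (x j) -> j = ordS i \/ i = ordS j) ->
    (forall i, #|[set y | @adj H (x i) y]| = 3) ->
    (* z_j, z_{j+1} specially linked in H - V(C) whenever distinct *)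
    (forall j (zj zj1 : vert H),
        @adj H (x j) zj -> zj != x (ord_pred j) -> zj != x (ordS j) ->
        @adj H (x (ordS j)) zj1 -> zj1 != x j -> zj1 != x (ordS (ordS j)) ->
        zj != zj1 ->
        specially_linked_gen inH' (@adj H) (~: [set x i | i in 'I_k]) zj zj1) ->
    inH' H.

(* Main.v *)
Require Import Defs.
From mathcomp Require Import all_boot zify.
From Stdlib Require Import Classical.

Section Forest.
Variables (T : finType) (f : rel T).
Hypotheses (fsym : forall x y, f x y = f y x) (firr : forall x, ~~ f x x).

Lemma long_paths (F : {set T}) :
  (forall v, v \in F -> forall u, exists y, [/\ y \in F, f v y & y != u]) ->
  F != set0 -> induces_forest f F ->
  forall n, exists u q, [/\ size q = n, uniq (u :: q), all (fun v => v \in F) (u :: q) & path f u q].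
Proof.
move=> hdeg hne hfor; elim=> [|n [u [q [hs hu ha hp]]]].
  case/set0Pn: hne => v hv; exists v, [::]; split => //=; by rewrite hv.
have [y [yF fuy ya]] := hdeg u (allP ha u (mem_head _ _)) (head u q).
case yin: (y \in u :: q); last first.
  exists y, (u :: q); split => //=.
  - by rewrite hs.
  - by rewrite -/(uniq (u :: q)) hu andbT yin.
  - by rewrite yF.
  by rewrite fsym fuy.
exfalso; apply: hfor.
have yu : y != u by apply/eqP => e; move: fuy; rewrite e (negbTE (firr u)).
move: yin; rewrite in_cons (negbTE yu) /=.
case: q hs hu ha hp ya => [//|a q'] _ hu ha hp /= ya.
rewrite in_cons (negbTE ya) /= => yq.
case/splitPr: yq hu ha hp => r1 r2 hu ha hp.
have e : u :: a :: r1 ++ y :: r2 = (u :: a :: r1 ++ [:: y]) ++ r2 by rewrite /= -catA.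
exists (u :: a :: r1 ++ [:: y]); split.
- by rewrite /= size_cat /= addn1.
- by move: hu; rewrite e cat_uniq => /andP [].
- apply/allP => v hv; apply: (allP ha); move: hv.
  by rewrite e mem_cat => ->.
rewrite [cycle _ _]/= rcons_path.
rewrite last_cat /= (fsym y u) fuy andbT.
move: hp; rewrite /= -cat1s catA cat_path cats1.
by case/and3P => -> ->.
Qed.


Lemma forest_leaf (F : {set T}) : F != set0 -> induces_forest f F ->
  exists v, v \in F /\ exists u, forall y, y \in F -> f v y -> y = u.
Proof.
move=> hne hfor; apply: NNPP => hn.
have hdeg : forall v, v \in F -> forall u, exists y, [/\ y \in F, f v y & y != u].
  move=> v vF u; apply: NNPP => hn2; apply: hn; exists v; split => //; exists u => y yF fvy.
  apply/eqP; apply: negbNE; apply/negP => hy; apply: hn2; by exists y.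
have [u [q [hs hu _ _]]] := long_paths F hdeg hne hfor #|T|.
have := max_card (mem (u :: q)).
by rewrite (card_uniqP hu) /= hs ltnn.
Qed.

Lemma forest_2col n (F : {set T}) : #|F| <= n -> induces_forest f F ->
  exists c : T -> bool, forall x y, x \in F -> y \in F -> f x y -> c x != c y.
Proof.
elim: n F => [|n IH] F hF hfor.
  exists (fun _ => true) => x y xF; move: hF; rewrite leqn0 => /eqP/card0_eq/(_ x).
  by rewrite xF.
have [->|hne] := eqVneq F set0.
  by exists (fun _ => true) => x y; rewrite inE.
have [v [vF [u hu]]] := forest_leaf F hne hfor.
have hF' : #|F :\ v| <= n by rewrite -ltnS; apply: leq_trans hF; rewrite (cardsD1 v F) vF.
have hfor' : induces_forest f (F :\ v).
  move=> [p [h1 h2 h3 h4]]; apply: hfor; exists p; split => //.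
  by apply/allP => z /(allP h3); rewrite inE => /andP [].
have [c hc] := IH _ hF' hfor'.
exists (fun x => if x == v then ~~ c u else c x) => x y xF yF fxy.
have xy : x != y by apply/eqP => e; move: fxy; rewrite e (negbTE (firr y)).
case: (eqVneq x v) => [exv|nxv]; case: (eqVneq y v) => [eyv|nyv].
- by move: xy; rewrite exv eyv eqxx.
- subst x; rewrite ?eqxx ?(negbTE nyv) (hu y yF fxy); by case: (c u).
- subst y; rewrite ?eqxx ?(negbTE nxv); rewrite fsym in fxy; rewrite (hu x xF fxy); by case: (c u).
rewrite ?(negbTE nxv) ?(negbTE nyv); apply: hc => //; by rewrite !inE ?nxv ?nyv.
Qed.

End Forest.

Lemma nb_three (T : finType) (S : {set T}) (f : rel T) :
  (forall x y, f x y = f y x) -> (forall x, ~~ f x x) ->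
  nb_colorable S f -> three_colorable S f.
Proof.
move=> fsym firr [I [F [hU hD hI hF]]].
have [c hc] := @forest_2col T f fsym firr _ F (leqnn #|F|) hF.
exists (fun x => if x \in I then (inord 2 : 'I_3) else if c x then inord 0 else inord 1).
move=> x y xS yS fxy.
have memIF z : z \in S -> (z \in I) || (z \in F) by rewrite -hU inE.
case xI: (x \in I); case yI: (y \in I).
- by move: (hI x y xI yI); rewrite fxy.
- by case: (c y); apply/eqP => /(congr1 val); rewrite /= !inordK.
- by case: (c x); apply/eqP => /(congr1 val); rewrite /= !inordK.
have xF : x \in F by move: (memIF x xS); rewrite xI.
have yF : y \in F by move: (memIF y yS); rewrite yI.
have := hc x y xF yF fxy.
by case: (c x); case: (c y) => // _; apply/eqP => /(congr1 val); rewrite /= !inordK.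
Qed.

Definition okc (E : seq (nat*nat)) (s : seq nat) (c : nat) : bool :=
  all (fun p => ((p.1 == size s) && (p.2 < size s) ==> (nth 0 s p.2 != c)) &&
                ((p.2 == size s) && (p.1 < size s) ==> (nth 0 s p.1 != c))) E.
Fixpoint ext (E : seq (nat*nat)) (n : nat) : seq (seq nat) :=
  if n is n'.+1 then flatten [seq [seq rcons s c | c <- [:: 0; 1; 2] & okc E s c] | s <- ext E n']
  else [:: [::]].

Lemma ext_sound E n s : s \in ext E n ->
  [/\ size s = n, all (fun c => c < 3) s &
      forall p, p \in E -> p.1 < n -> p.2 < n -> p.1 != p.2 -> nth 0 s p.1 != nth 0 s p.2].
Proof.
elim: n s => [|n IH] s.
  by rewrite /= inE => /eqP ->; split.
case/flatten_mapP => s' /IH [hs ha hp].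
case/mapP => c; rewrite mem_filter => /andP [hok hc] ->.
have c3 : c < 3 by move: hc; rewrite !inE => /or3P [] /eqP ->.
split.
- by rewrite size_rcons hs.
- by rewrite all_rcons c3.
move=> p pE p1 p2 pne.
have := allP hok p pE; rewrite hs !nth_rcons hs => /andP [h1 h2].
move: p1 p2; rewrite !ltnS => p1 p2.
case: (ltnP p.1 n) => l1; case: (ltnP p.2 n) => l2.
- exact: hp.
- have e2 : p.2 = n by apply/eqP; rewrite eqn_leq p2 l2.
  by move: h2; rewrite e2 eqxx l1 /=.
- have e1 : p.1 = n by apply/eqP; rewrite eqn_leq p1 l1.
  by move: h1; rewrite e1 eqxx l2 /= eq_sym.
- have e1 : p.1 = n by apply/eqP; rewrite eqn_leq p1 l1.
  have e2 : p.2 = n by apply/eqP; rewrite eqn_leq p2 l2.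
  by move: pne; rewrite e1 e2 eqxx.
Qed.

Lemma ext_complete E (g : nat -> nat) n : (forall i, g i < 3) ->
  (forall p, p \in E -> p.1 < n -> p.2 < n -> g p.1 != g p.2) -> mkseq g n \in ext E n.
Proof.
move=> g3; elim: n => [|n IH] hv; first by rewrite /= inE.
apply/flatten_mapP; exists (mkseq g n).
  apply: IH => p pE p1 p2; apply: hv => //; exact: ltnW.
have -> : mkseq g n.+1 = rcons (mkseq g n) (g n) by rewrite /mkseq -addn1 iotaD map_cat cats1.
apply: map_f.
rewrite mem_filter; apply/andP; split; last first.
  by have := g3 n; case: (g n) => [|[|[|]]].
apply/allP => p pE; rewrite size_mkseq.
apply/andP; split; apply/implyP => /andP [/eqP e l]; rewrite nth_mkseq //.
- rewrite -e eq_sym; apply: hv => //; [by rewrite e | exact: ltnW].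
- rewrite -e; apply: hv => //; [exact: ltnW | by rewrite e].
Qed.

Definition wf n (E : seq (nat * nat)) := all (fun p => (p.1 < n) && (p.2 < n) && (p.1 != p.2)) E.

Lemma nc_of n E : ext E n = [::] -> ~ three_colorable setT (@rel_of_edges n E).
Proof.
move=> h; case: n h => [//|n] h [c hc].
pose g i := if i < n.+1 then val (c (inord i)) else 0.
suff : mkseq g n.+1 \in ext E n.+1 by rewrite h.
apply: ext_complete.
  by move=> i; rewrite /g; case: ifP => // _; exact: ltn_ord.
move=> p pE p1 p2; rewrite /g p1 p2.
apply: hc; rewrite ?inE //.
by rewrite /rel_of_edges !inordK // -surjective_pairing pE.
Qed.

Lemma col_of n E s : wf n E -> s \in ext E n -> three_colorable setT (@rel_of_edges n E).
Proof.
move=> hw /ext_sound [hs ha hp].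
exists (fun x : 'I_n => (inord (nth 0 s x) : 'I_3)) => x y _ _ hxy.
have n3 (z : 'I_n) : nth 0 s z < 3 by apply: (allP ha); apply: mem_nth; rewrite hs.
suff: nth 0 s x != nth 0 s y.
  by apply: contra => /eqP /(congr1 val); rewrite /= !inordK // => ->.
case/orP: hxy => h.
- have /andP [_ ne] := allP hw _ h.
  exact: (hp (x : nat, y : nat) h (ltn_ord x) (ltn_ord y) ne).
- have /andP [_ ne] := allP hw _ h.
  rewrite eq_sym; exact: (hp (y : nat, x : nat) h (ltn_ord y) (ltn_ord x) ne).
Qed.

Lemma col_mono (T : finType) (S : {set T}) (f f' : rel T) :
  (forall x y, f' x y -> f x y) -> three_colorable S f -> three_colorable S f'.
Proof. move=> h [c hc]; exists c => x y xS yS /h; exact: hc. Qed.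

Definition rm (p : nat * nat) (E : seq (nat * nat)) :=
  filter (fun q => (q != p) && (q != (p.2, p.1))) E.

Definition del {T : eqType} (e : rel T) (u v : T) : rel T :=
  fun x y => e x y && ~~ ((x == u) && (y == v) || (x == v) && (y == u)).

Lemma ed_of n E : wf n E -> all (fun p => ext (rm p E) n != [::]) E ->
  forall u v, @rel_of_edges n E u v -> three_colorable setT (del (@rel_of_edges n E) u v).
Proof.
move=> hw hall u v huv.
have [p [pE hp]] : exists p, p \in E /\ (p = (u : nat, v : nat) \/ p = (v : nat, u : nat)).
  by case/orP: huv => h; [exists (u : nat, v : nat) | exists (v : nat, u : nat)]; auto.
have hne := allP hall p pE.
case e: (ext (rm p E) n) hne => [//|s rest] _.
have wf' : wf n (rm p E) by apply/allP => q; rewrite mem_filter => /andP [_ /(allP hw)].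
have he : s \in ext (rm p E) n by rewrite e mem_head.
have hc := @col_of n (rm p E) s wf' he.
apply: (@col_mono _ _ _ _ _ hc).
move=> x y /andP [hxy hn]; rewrite /rel_of_edges !mem_filter.
have hq : ((x : nat, y : nat) != p) && ((x : nat, y : nat) != (p.2, p.1)) &&
          ((y : nat, x : nat) != p) && ((y : nat, x : nat) != (p.2, p.1)).
  move: hn; case: hp => -> /=; rewrite !xpair_eqE !val_eqE;
  by case: (x == u); case: (y == v); case: (x == v); case: (y == u).
case/andP: hq => /andP [/andP [h1 h2] h3] h4.
by case/orP: hxy => ->; rewrite ?h1 ?h2 ?h3 ?h4 ?orbT.
Qed.

Lemma deg_of n E : wf n E -> all (fun i => has (fun p => (p.1 == i) || (p.2 == i)) E) (iota 0 n) ->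
  forall x : 'I_n, exists y, @rel_of_edges n E x y.
Proof.
move=> hw hd x; have := allP hd x; rewrite mem_iota ltn_ord => /(_ isT).
case/hasP => p pE; have /andP [/andP [p1 p2] _] := allP hw p pE.
case/orP => /eqP e.
- by exists (Ordinal p2); rewrite /rel_of_edges /= -e -surjective_pairing pE.
- by exists (Ordinal p1); rewrite /rel_of_edges /= -e -surjective_pairing pE orbT.
Qed.
Lemma odd5 (g h : 'I_5 -> 'I_3) :
  (forall i, g i != h i) -> (forall i, g i != g (ordS i)) -> (forall i, h i = h (ordS i)) -> False.
Proof.
move=> gh gg hh.
pose a0 : 'I_5 := ord0. pose a1 := ordS a0. pose a2 := ordS a1. pose a3 := ordS a2. pose a4 := ordS a3.
have e : ordS a4 = a0 by apply/val_inj.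
have f0 : g a0 != g a1 := gg a0. have f1 : g a1 != g a2 := gg a1.
have f2 : g a2 != g a3 := gg a2. have f3 : g a3 != g a4 := gg a3.
have f4 : g a4 != g a0 by have := gg a4; rewrite e.
have k1 : h a1 = h a0 := esym (hh a0). have k2 : h a2 = h a1 := esym (hh a1).
have k3 : h a3 = h a2 := esym (hh a2). have k4 : h a4 = h a3 := esym (hh a3).
have m0 := gh a0. have m1 := gh a1. have m2 := gh a2. have m3 := gh a3. have m4 := gh a4.
rewrite k4 k3 k2 k1 in m4; rewrite k3 k2 k1 in m3; rewrite k2 k1 in m2; rewrite k1 in m1.
clearbody a0 a1 a2 a3 a4.
move: f0 f1 f2 f3 f4 m0 m1 m2 m3 m4.
move: (g a0) (g a1) (g a2) (g a3) (g a4) (h a0) => [x0 ?] [x1 ?] [x2 ?] [x3 ?] [x4 ?] [y ?].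
rewrite -!val_eqE /=.
lia.
Qed.

Lemma odd3 (g h : 'I_3 -> 'I_3) :
  (forall i, g i != h i) -> (forall i, g i != g (ordS i)) -> (forall i, h i = h (ordS i)) -> False.
Proof.
move=> gh gg hh.
pose a0 : 'I_3 := ord0. pose a1 := ordS a0. pose a2 := ordS a1.
have e : ordS a2 = a0 by apply/val_inj.
have f0 : g a0 != g a1 := gg a0. have f1 : g a1 != g a2 := gg a1.
have f2 : g a2 != g a0 by have := gg a2; rewrite e.
have k1 : h a1 = h a0 := esym (hh a0). have k2 : h a2 = h a1 := esym (hh a1).
have m0 := gh a0. have m1 := gh a1. have m2 := gh a2.
rewrite k2 k1 in m2; rewrite k1 in m1.
clearbody a0 a1 a2.
move: f0 f1 f2 m0 m1 m2.
move: (g a0) (g a1) (g a2) (h a0) => [x0 ?] [x1 ?] [x2 ?] [y ?].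
rewrite -!val_eqE /=.
lia.
Qed.

Lemma odd_contra k (g h : 'I_k -> 'I_3) : (k = 3 \/ k = 5) ->
  (forall i, g i != h i) -> (forall i, g i != g (ordS i)) -> (forall i, h i = h (ordS i)) -> False.
Proof. by case=> ?; subst k; [apply: odd3 | apply: odd5]. Qed.

Lemma sne k (j : 'I_k) : (k = 3 \/ k = 5) -> ordS j != ord_pred j.
Proof.
case=> ?; subst k.
  by case: j => [[|[|[|?]]] ?].
by case: j => [[|[|[|[|[|?]]]]] ?].
Qed.

Definition NC (G : graph) : Prop := ~ three_colorable setT (@adj G).

Lemma step (H : graph) (k : nat) (x : 'I_k -> vert H) :
    simple_rel (@adj H) -> (k = 3 \/ k = 5) -> injective x ->
    (forall i, @adj H (x i) (x (ordS i))) ->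
    (forall i, #|[set y | @adj H (x i) y]| = 3) ->
    (forall j (zj zj1 : vert H),
        @adj H (x j) zj -> zj != x (ord_pred j) -> zj != x (ordS j) ->
        @adj H (x (ordS j)) zj1 -> zj1 != x j -> zj1 != x (ordS (ordS j)) ->
        zj != zj1 ->
        specially_linked_gen NC (@adj H) (~: [set x i | i in 'I_k]) zj zj1) ->
    NC H.
Proof.
move=> [hsym hirr] hk hinj hc hdeg hsl [c hcol].
have col a b : adj a b -> c a != c b by move=> hab; apply: hcol; rewrite ?inE.
have ex3 j : exists y, adj (x j) y && (y != x (ord_pred j)) && (y != x (ordS j)).
  set N := [set y | adj (x j) y].
  have aN : x (ord_pred j) \in N.
    by rewrite inE hsym; have := hc (ord_pred j); rewrite ord_predK.
  have bN : x (ordS j) \in N by rewrite inE hc.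
  have ab : x (ordS j) != x (ord_pred j) by rewrite (inj_eq hinj) sne.
  have : 0 < #|N :\ x (ord_pred j) :\ x (ordS j)|.
    have := hdeg j; rewrite -/N (cardsD1 (x (ord_pred j)) N) aN.
    rewrite (cardsD1 (x (ordS j)) (N :\ x (ord_pred j))) in_setD1 ab bN /=.
    by move=> /eqP; rewrite !add1n !eqSS => /eqP ->.
  case/card_gt0P => y; rewrite !inE => /and3P [h1 h2 h3].
  by exists y; rewrite h1 h2 h3.
pose zf j := odflt (x j) [pick y | adj (x j) y && (y != x (ord_pred j)) && (y != x (ordS j))].
have zP j : adj (x j) (zf j) && (zf j != x (ord_pred j)) && (zf j != x (ordS j)).
  rewrite /zf; case: pickP => [y -> //| hn].
  by have [y hy] := ex3 j; move: (hn y); rewrite hy.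
have link j : c (zf j) = c (zf (ordS j)).
  case: (eqVneq (zf j) (zf (ordS j))) => [-> //| ne].
  have /andP [/andP [z1 z2] z3] := zP j.
  have /andP [/andP [w1 w2] w3] := zP (ordS j).
  rewrite ordSK in w2.
  have [H' [hnc [v [w [hvw [phi [_ _ pv pw hphi]]]]]]] := hsl j _ _ z1 z2 z3 w1 w2 w3 ne.
  apply/eqP; apply: negbNE; apply/negP => hdiff.
  apply: hnc; exists (fun a => c (phi a)) => a b _ _ hab.
  case: (boolP ((a == v) && (b == w) || (a == w) && (b == v))) => [hvw'|hn].
  - by case/orP: hvw' => /andP [/eqP -> /eqP ->]; rewrite pv pw // eq_sym.
  - apply: col; exact: hphi.
apply: (@odd_contra k (fun i => c (x i)) (fun i => c (zf i)) hk) => i.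
- by apply: col; have /andP [/andP [] ] := zP i.
- exact: col.
- exact: link.
Qed.

Definition crit_data {T : finType} (e : rel T) : Prop :=
  [/\ ~ three_colorable setT e, (forall u v, e u v -> three_colorable setT (del e u v))
    & forall x, exists y, e x y].

Lemma data_of n E : wf n E -> ext E n = [::] ->
  all (fun p => ext (rm p E) n != [::]) E ->
  all (fun i => has (fun p => (p.1 == i) || (p.2 == i)) E) (iota 0 n) ->
  crit_data (@rel_of_edges n E).
Proof.
move=> hw h1 h2 h3; split; [exact: nc_of | exact: ed_of | exact: deg_of].
Qed.

Lemma transport {T T' : finType} (e : rel T) (e' : rel T') (phi : T -> T') :
  bijective phi -> (forall x y, e' (phi x) (phi y) = e x y) -> crit_data e' -> crit_data e.
Proof.
case=> psi hpk hkp he [h1 h2 h3]; split.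
- move=> [c hc]; apply: h1; exists (fun x => c (psi x)) => x y _ _ hxy.
  by apply: hc; rewrite ?inE // -he !hkp.
- move=> u v huv; have huv' : e' (phi u) (phi v) by rewrite he.
  have [c hc] := h2 (phi u) (phi v) huv'.
  exists (fun x => c (phi x)) => x y _ _ /andP [hxy hn].
  apply: hc; rewrite ?inE //; apply/andP; split; first by rewrite he.
  by rewrite !(inj_eq (can_inj hpk)).
- move=> x; have [y hy] := h3 (phi x); exists (psi y); by rewrite -he hkp.
Qed.

Lemma crit_from_data {T : finType} (e : rel T) : crit_data e ->
  forall S f, proper_subgraph e S f -> three_colorable S f.
Proof.
case=> _ h2 h3 S f [[fsym fe] hp].
case: hp => [hS | [a [b /andP [hab hf]]]].
- move: hS; rewrite eqEsubset subsetT /= => /subsetPn [v _ vS].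
  have [y hy] := h3 v; have [c hc] := h2 v y hy.
  exists c => a b aS bS fab; have /and3P [eab _ _] := fe a b fab.
  apply: hc; rewrite ?inE //; apply/andP; split => //.
  have av : a != v by apply: contraNneq vS => <-.
  have bv : b != v by apply: contraNneq vS => <-.
  by rewrite (negbTE av) (negbTE bv) /= andbF.
- have [c hc] := h2 a b hab.
  exists c => x y xS yS fxy; have /and3P [exy _ _] := fe x y fxy.
  apply: hc; rewrite ?inE //; apply/andP; split => //.
  apply/negP => /orP [] /andP [/eqP ex /eqP ey]; subst x y.
  + by rewrite fxy in hf.
  + by rewrite fsym fxy in hf.
Qed.

Definition E4 : seq (nat * nat) := [:: (0,1); (0,2); (0,3); (1,2); (1,3); (2,3)]%N.
Definition EW5 : seq (nat * nat) :=
  [:: (0,1); (1,2); (2,3); (3,4); (4,0); (0,5); (1,5); (2,5); (3,5); (4,5)]%N.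
Definition EJ7 : seq (nat * nat) :=
  [:: (0,4); (0,6); (0,3); (1,4); (1,5); (1,3); (2,5); (2,6); (2,3);
      (4,5); (4,6); (5,6)]%N.
Definition EJ12 : seq (nat * nat) :=
  [:: (0,1); (2,3); (4,5); (0,2); (0,3); (1,4); (1,5);
      (6,2); (6,3); (7,2); (7,3); (8,4); (8,5); (9,4); (9,5);
      (10,6); (10,8); (11,7); (11,9); (10,11)]%N.

Lemma K4E (x y : 'I_4) : (x != y) = @rel_of_edges 4 E4 x y.
Proof. by case: x => [[|[|[|[|?]]]] ?]; case: y => [[|[|[|[|?]]]] ?]. Qed.

Lemma dK4 : crit_data (@rel_of_edges 4 E4).
Proof. by apply: data_of; vm_compute. Qed.
Lemma dW5 : crit_data (@rel_of_edges 6 EW5).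
Proof. by apply: data_of; vm_compute. Qed.
Lemma dJ7 : crit_data (@rel_of_edges 7 EJ7).
Proof. by apply: data_of; vm_compute. Qed.
Lemma dJ12 : crit_data (@rel_of_edges 12 EJ12).
Proof. by apply: data_of; vm_compute. Qed.

Lemma base_data H : is_base H -> crit_data (@adj H).
Proof.
case=> [|[|[|]]] [phi [hb he]].
- apply: (@transport _ _ _ (@rel_of_edges 4 E4) phi hb); last exact: dK4.
  by move=> x y; rewrite -K4E -he.
- exact: (@transport _ _ _ (@rel_of_edges 6 EW5) phi hb he dW5).
- exact: (@transport _ _ _ (@rel_of_edges 7 EJ7) phi hb he dJ7).
- exact: (@transport _ _ _ (@rel_of_edges 12 EJ12) phi hb he dJ12).
Qed.

Lemma base_nc H : simple_rel (@adj H) -> is_base H -> NC H.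
Proof. by move=> _ /base_data []. Qed.

Fixpoint nc_all H (p : inH' H) {struct p} : NC H :=
 match p with
 | inH'_base H hs hb => @base_nc H hs hb
 | inH'_rec H k x hs hnb hk hinj hc hind hdeg hsl =>
    @step H k x hs hk hinj hc hdeg (fun j zj zj1 a1 a2 a3 a4 a5 a6 a7 =>
      match hsl j zj zj1 a1 a2 a3 a4 a5 a6 a7 with
      | ex_intro H' (conj pH' rest) => ex_intro _ H' (conj (nc_all H' pH') rest) end)
 end.

Theorem lemma3p6 (H : graph) : inH' H -> four_critical (@adj H).
Proof.
move=> hin; split; first exact: (nc_all H hin).
case: hin => [H0 hs hb | H0 k x [hsym hirr] hnb _ _ _ _ _ _] S f hp.
- exact: (@crit_from_data _ _ (base_data H0 hb) S f hp).
- have [[fsym fe] _] := hp.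
  apply: nb_three => //.
    by move=> a; apply/negP => /fe /and3P [h _ _]; move: (hirr a); rewrite h.
  exact: (proj2 hnb S f hp).
Qed.
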